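(* For every integer $\Delta \geq 2$ there is a connected graph $G$ with $\Delta(G) = \Delta$ such that $c_V(G) = 2(\Delta-1)$ and $c_E(G) = \Delta$.
   Context: $\Delta(G)$ is the maximum degree. In all games the players alternate turns, cops first; initially the cop player places all cops, then the robber player places the robber on a vertex (several pieces may share a position). In a turn each piece of the moving player may stay or make one move (no obligation to move). The robber always sits on vertices and moves to an adjacent vertex; $v_r$ denotes his current vertex. Vertex version: cops on vertices moving to adjacent vertices; cops win when every neighbor of $v_r$ is occupied by a cop; $c_V(G)$ is the least number of cops that can force a win in finitely many turns. Edge version: cops sit on edges; a cop on edge $e$ may move to any edge sharing an endpoint with $e$; cops win when every edge incident to $v_r$ is occupied; the corresponding number is $c_E(G)$. *)

(* Defs.v *)
From mathcomp Require Import all_boot.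
Set Implicit Arguments. Unset Strict Implicit. Unset Printing Implicit Defensive.

(* A finite simple graph is given by a finType T and e : rel T with
   symmetric e and irreflexive e. *)

Definition max_degree (T : finType) (e : rel T) : nat :=
  \max_(v : T) #|[set w | e v w]|.

Definition connected_graph (T : finType) (e : rel T) : Prop :=
  forall x y : T, connect e x y.

(* Generic game: cops occupy positions of type P (valid ones), a cop at p may
   move to any q with mv p q (staying is included in mv);  the robber sits on
   vertices of T and moves along e or stays;  caught c r says that the cops in
   configuration c have won against the robber at r.  The game is won by the
   cops in finitely many turns iff the position is in the inductive attractor. *)
Section Game.
Variables (T P : finType) (e : rel T) (k : nat) (mv : rel P)
          (caught : {ffun 'I_k -> P} -> T -> bool).

Definition cops_step (c c' : {ffun 'I_k -> P}) : bool := [forall i, mv (c i) (c' i)].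

Inductive cop_turn : {ffun 'I_k -> P} -> T -> Prop :=
| CT_caught c r : caught c r -> cop_turn c r
| CT_move c c' r : cops_step c c' -> rob_turn c' r -> cop_turn c r
with rob_turn : {ffun 'I_k -> P} -> T -> Prop :=
| RT_caught c r : caught c r -> rob_turn c r
| RT_move c r : (forall r', (r' == r) || e r r' -> cop_turn c r') -> rob_turn c r.

End Game.

Definition cops_win (T P : finType) (e : rel T) (k : nat) (valid : pred P)
    (mv : rel P) (caught : {ffun 'I_k -> P} -> T -> bool) : Prop :=
  exists c0 : {ffun 'I_k -> P}, [forall i, valid (c0 i)] /\
    forall r0 : T, cop_turn e mv caught c0 r0.

Definition vmove (T : finType) (e : rel T) : rel T := fun x y => (x == y) || e x y.
Definition vcaught (T : finType) (e : rel T) (k : nat)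
    (c : {ffun 'I_k -> T}) (r : T) : bool :=
  [forall w, e r w ==> [exists i, c i == w]].
Definition vertex_cops_win (T : finType) (e : rel T) (k : nat) : Prop :=
  cops_win e (fun _ : T => true) (vmove e) (@vcaught T e k).

Definition is_edge (T : finType) (e : rel T) (A : {set T}) : bool :=
  [exists u, exists v, e u v && (A == [set u; v])].
Definition emove (T : finType) (e : rel T) : rel {set T} :=
  fun A B => is_edge e B && (A :&: B != set0).
Definition ecaught (T : finType) (e : rel T) (k : nat)
    (c : {ffun 'I_k -> {set T}}) (r : T) : bool :=
  [forall w, e r w ==> [exists i, c i == [set r; w]]].
Definition edge_cops_win (T : finType) (e : rel T) (k : nat) : Prop :=
  cops_win e (is_edge e) (emove e) (@ecaught T e k).

Definition cV_is (T : finType) (e : rel T) (m : nat) : Prop :=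
  vertex_cops_win e m /\ forall k, k < m -> ~ vertex_cops_win e k.
Definition cE_is (T : finType) (e : rel T) (m : nat) : Prop :=
  edge_cops_win e m /\ forall k, k < m -> ~ edge_cops_win e k.

(* Main.v *)
Require Import Defs.
From mathcomp Require Import all_boot.
Set Implicit Arguments. Unset Strict Implicit. Unset Printing Implicit Defensive.

Definition V (m : nat) : finType := option ('I_m.+2 * option 'I_m.+1).

Definition adj (m : nat) : rel (V m) := fun u v =>
  match u, v with
  | None, Some (_, None) => true
  | Some (_, None), None => true
  | Some (i, None), Some (i', Some _) => i == i'
  | Some (i, Some _), Some (i', None) => i == i'
  | _, _ => false
  end.

Lemma adj_sym m : symmetric (@adj m).
Proof.
by move=> [[i [l|]]|] [[i' [l'|]]|] //=; rewrite eq_sym.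
Qed.

Lemma adj_irr m : irreflexive (@adj m).
Proof. by move=> [[i [l|]]|]. Qed.

Lemma adj_conn m : connected_graph (@adj m).
Proof.
have toR : forall x : V m, connect (@adj m) x None.
  move=> [[i [l|]]|] //.
  - by apply/connectP; exists [:: Some (i, None); None] => //=; rewrite eqxx.
  - exact: connect1.
have fromR : forall x : V m, connect (@adj m) None x.
  move=> [[i [l|]]|] //.
  - by apply/connectP; exists [:: Some (i, None); Some (i, Some l)] => //=; rewrite eqxx.
  - exact: connect1.
by move=> x y; apply: connect_trans (toR x) (fromR y).
Qed.

Definition xv m (j : 'I_m.+2) : V m := Some (j, None).
Definition lf m (j : 'I_m.+2) (l : 'I_m.+1) : V m := Some (j, Some l).

Lemma xv_inj m : injective (@xv m).
Proof. by move=> a b [->]. Qed.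
Lemma lf_inj m j : injective (@lf m j).
Proof. by move=> a b [->]. Qed.

Lemma nbr_root m : [set w | @adj m None w] = [set xv j | j : 'I_m.+2].
Proof.
apply/setP => w; rewrite inE; apply/idP/imsetP.
  by case: w => [[j [l|]]|] //= _; exists j.
by case=> j _ ->.
Qed.

Lemma deg_root m : #|[set w | @adj m None w]| = m.+2.
Proof. by rewrite nbr_root card_imset ?card_ord //; apply: xv_inj. Qed.

Lemma deg_le m (v : V m) : #|[set w | adj v w]| <= m.+2.
Proof.
case: v => [[i [l|]]|]; last by rewrite deg_root.
- apply: (@leq_trans #|[set xv i]|); last by rewrite cards1.
  apply: subset_leq_card; apply/subsetP => w; rewrite !inE.
  by case: w => [[j [l'|]]|] //= /eqP ->.
- apply: (@leq_trans #|None |: [set lf i l | l : 'I_m.+1]|).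
    apply: subset_leq_card; apply/subsetP => w; rewrite inE.
    case: w => [[j [l'|]]|] //=; last by move=> _; apply/setU1P; left.
    move=> /eqP <-; apply/setU1P; right.
    by apply/imsetP; exists l'.
  rewrite cardsU1 card_imset ?card_ord //; last exact: lf_inj.
  by case: (_ \notin _).
Qed.

Lemma maxdeg m : max_degree (@adj m) = m.+2.
Proof.
apply/eqP; rewrite eqn_leq; apply/andP; split.
  by apply/bigmax_leqP => v _; apply: deg_le.
by rewrite -{1}(deg_root m); apply: (@leq_bigmax _ (fun v : V m => #|[set w | adj v w]|)).
Qed.

Scheme cop_turn_ind2 := Induction for cop_turn Sort Prop
  with rob_turn_ind2 := Induction for rob_turn Sort Prop.

Lemma robber_escape (T P : finType) (e : rel T) (k : nat) (mv : rel P)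
  (caught : {ffun 'I_k -> P} -> T -> bool) (Good : {ffun 'I_k -> P} -> T -> Prop) :
  (forall c r, Good c r -> ~~ caught c r) ->
  (forall c c' r, Good c r -> cops_step mv c c' ->
     ~~ caught c' r /\ exists r', ((r' == r) || e r r') /\ Good c' r') ->
  forall c r, cop_turn e mv caught c r -> ~ Good c r.
Proof.
move=> H1 H2 c r ct.
apply: (@cop_turn_ind2 T P e k mv caught (fun c r _ => ~ Good c r)
   (fun c r _ => ~~ caught c r -> (exists r', ((r' == r) || e r r') /\ Good c r') -> False)) ct.
- by move=> c0 r0 ca G; move: (H1 _ _ G); rewrite ca.
- move=> c0 c1 r0 st rt IH G; have [nc ex] := H2 _ _ _ G st; exact: IH nc ex.
- by move=> c0 r0 ca; rewrite ca.
- by move=> c0 r0 f IH _ [r' [a G]]; exact: IH r' a G.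
Qed.

Lemma no_win (T P : finType) (e : rel T) (k : nat) (valid : pred P) (mv : rel P)
  (caught : {ffun 'I_k -> P} -> T -> bool) (Good : {ffun 'I_k -> P} -> T -> Prop) :
  (forall c r, Good c r -> ~~ caught c r) ->
  (forall c c' r, Good c r -> cops_step mv c c' ->
     ~~ caught c' r /\ exists r', ((r' == r) || e r r') /\ Good c' r') ->
  (forall c, exists r, Good c r) ->
  ~ cops_win e valid mv caught.
Proof.
move=> H1 H2 H3 [c0 [_ W]]; have [r G] := H3 c0.
exact: robber_escape H1 H2 _ _ (W r) G.
Qed.

Lemma ecaught_card (T : finType) (e : rel T) (k : nat) (c : {ffun 'I_k -> {set T}}) r :
  irreflexive e -> ecaught e c r -> #|[set w | e r w]| <= k.
Proof.
move=> irr /forallP H.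
pose g (i : 'I_k) := odflt r [pick w | c i == [set r; w]].
apply: (@leq_trans #|g @: [set: 'I_k]|); last by rewrite (leq_trans (leq_imset_card _ _)) // cardsT card_ord.
apply: subset_leq_card; apply/subsetP => w; rewrite inE => erw.
have /existsP [i /eqP ci] := implyP (H w) erw.
apply/imsetP; exists i; rewrite ?inE //.
rewrite /g; case: pickP => [w' /eqP|] /=; last by move/(_ w); rewrite ci eqxx.
rewrite ci => E.
have : w \in [set r; w'] by rewrite -E !inE eqxx orbT.
rewrite !inE => /orP [/eqP wr|/eqP //].
by move: erw; rewrite wr irr.
Qed.

Lemma edge_lower m k : k < m.+2 -> ~ edge_cops_win (@adj m) k.
Proof.
move=> hk; apply: (@no_win _ _ _ _ _ _ _ (fun _ r => r = None)).
- move=> c r -> ; apply/negP => /(ecaught_card (@adj_irr m)).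
  by rewrite deg_root leqNgt hk.
- move=> c c' r -> _; split; last by exists None; rewrite eqxx.
  apply/negP => /(ecaught_card (@adj_irr m)).
  by rewrite deg_root leqNgt hk.
- by move=> c; exists None.
Qed.

From Stdlib Require Import Classical.

Lemma vcount (T : finType) (e : rel T) k (c c' : {ffun 'I_k -> T}) v (W : {set T}) (S : pred T) :
  symmetric e ->
  cops_step (vmove e) c c' -> vcaught e c' v -> (forall w, w \in W -> e v w) ->
  (forall w u, w \in W -> vmove e u w -> S u) -> #|W| <= #|[set i | S (c i)]|.
Proof.
move=> sym /forallP st /forallP vc hW hS.
apply: (@leq_trans #|c' @: [set i | S (c i)]|); last exact: leq_imset_card.
apply: subset_leq_card; apply/subsetP => w wW.
have /existsP [i /eqP ci] := implyP (vc w) (hW w wW).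
apply/imsetP; exists i => //; rewrite inE; apply: (hS w) => //.
by rewrite -ci; apply: st.
Qed.

Definition Ar m (j : 'I_m.+2) : pred (V m) := fun u =>
  match u with Some (i, _) => i == j | None => false end.

Definition safe m k (c : {ffun 'I_k -> V m}) (r : V m) :=
  forall c', cops_step (vmove (@adj m)) c c' -> ~~ vcaught (@adj m) c' r.

Lemma notsafe m k (c : {ffun 'I_k -> V m}) r : ~ safe c r ->
  exists c', cops_step (vmove (@adj m)) c c' /\ vcaught (@adj m) c' r.
Proof.
move=> ns; apply: NNPP => nex; apply: ns => c' st; apply/negP => vc; apply: nex.
by exists c'.
Qed.

Lemma surr_x m k (c : {ffun 'I_k -> V m}) j : ~ safe c (xv j) ->
  m.+1 <= #|[set i | Ar j (c i)]|.
Proof.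
move=> /notsafe [c' [st vc]].
have -> : m.+1 = #|[set lf j l | l : 'I_m.+1]| by rewrite card_imset ?card_ord //; apply: lf_inj.
apply: (vcount (@adj_sym m) st vc).
  by move=> w /imsetP [l _ ->] /=.
move=> w u /imsetP [l _ ->]; rewrite /vmove.
case: u => [[i [l'|]]|] //=.
- by rewrite orbF => /eqP [-> _].
- by case/orP => [/eqP //|].
Qed.

Lemma surr_root m k (c : {ffun 'I_k -> V m}) j : ~ safe c None ->
  m.+1 <= #|[set i | ~~ Ar j (c i)]|.
Proof.
move=> /notsafe [c' [st vc]].
have -> : m.+1 = #|[set xv (lift j t) | t : 'I_m.+1]|.
  by rewrite card_imset ?card_ord // => a b /xv_inj /lift_inj.
apply: (@vcount _ _ _ c c' None _ (fun u => ~~ Ar j u) (@adj_sym m) st vc).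
  by move=> w /imsetP [l _ ->] /=.
move=> w u /imsetP [t _ ->]; rewrite /vmove.
have nj : (lift j t == j) = false by apply/negbTE; rewrite eq_sym neq_lift.
case: u => [[i [l'|]]|] //=.
- by case/orP => [/eqP //| /eqP ->]; rewrite nj.
- by rewrite orbF => /eqP [->]; rewrite nj.
Qed.

Lemma cnt_compl k (T : finType) (c : {ffun 'I_k -> T}) (P : pred T) :
  #|[set i | P (c i)]| + #|[set i | ~~ P (c i)]| = k.
Proof.
have -> : [set i | ~~ P (c i)] = ~: [set i | P (c i)] by apply/setP => i; rewrite !inE.
by rewrite cardsC card_ord.
Qed.

From mathcomp Require Import zify.

Definition j0 m : 'I_m.+2 := ord0.
Definition j1 m : 'I_m.+2 := @Ordinal m.+2 1 isT.
Definition Sr m (r : V m) : bool := (r == None) || (r == xv (j0 m)) || (r == xv (j1 m)).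

Lemma key_x m k (hk : k < m.+1 + m.+1) (c : {ffun 'I_k -> V m}) j :
  exists r', ((r' == xv j) || adj (xv j) r') /\ (r' = xv j \/ r' = None) /\ safe c r'.
Proof.
case: (classic (safe c (xv j))) => s0; first by exists (xv j); rewrite eqxx; auto.
case: (classic (safe c None)) => s1; first by exists None; auto.
have := surr_x s0; have := surr_root j s1; have := cnt_compl c (Ar j); lia.
Qed.

Lemma key m k (hk : k < m.+1 + m.+1) (c : {ffun 'I_k -> V m}) r : Sr r ->
  exists r', ((r' == r) || adj r r') /\ Sr r' /\ safe c r'.
Proof.
have A01 : #|[set i | Ar (j0 m) (c i)]| + #|[set i | Ar (j1 m) (c i)]| <= k.
  have := cnt_compl c (Ar (j0 m)).
  suff : #|[set i | Ar (j1 m) (c i)]| <= #|[set i | ~~ Ar (j0 m) (c i)]| by lia.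
  apply: subset_leq_card.
  by apply/subsetP => i; rewrite !inE; case: (c i) => [[i' _]|] //= /eqP ->.
have Sx : forall j r', (j == j0 m) || (j == j1 m) -> (r' = xv j \/ r' = None) -> Sr r'.
  move=> j r' /orP [] /eqP -> [] ->; rewrite /Sr eqxx ?orbT //.
case/orP => [/orP [] /eqP -> | /eqP ->].
- case: (classic (safe c (xv (j0 m)))) => s0; first by exists (xv (j0 m)); rewrite /Sr eqxx orbT.
  case: (classic (safe c (xv (j1 m)))) => s1; first by exists (xv (j1 m)); rewrite /Sr eqxx orbT.
  have := surr_x s0; have := surr_x s1; lia.
- have [r' [a [b s]]] := key_x hk c (j0 m); exists r'; split => //; split => //.
  by apply: (Sx (j0 m)); rewrite ?eqxx.
- have [r' [a [b s]]] := key_x hk c (j1 m); exists r'; split => //; split => //.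
  by apply: (Sx (j1 m)); rewrite ?eqxx ?orbT.
Qed.

Lemma vertex_lower m k : k < m.+1 + m.+1 -> ~ vertex_cops_win (@adj m) k.
Proof.
move=> hk; apply: (@no_win _ _ _ _ _ _ _ (fun c r => Sr r /\ safe c r)).
- move=> c r [_ s]; apply: s; apply/forallP => i; by rewrite /vmove eqxx.
- move=> c c' r [b0 s] st; split; first exact: s.
  have [r' [a [b s']]] := key hk c' (r := r) b0; by exists r'.
- move=> c; have [r' [_ [b s]]] := key hk c (r := None) isT; by exists r'.
Qed.

Lemma win_now (T P : finType) (e : rel T) (k : nat) (mv : rel P)
  (caught : {ffun 'I_k -> P} -> T -> bool) c c' r :
  cops_step mv c c' -> caught c' r -> cop_turn e mv caught c r.
Proof. by move=> st ca; apply: CT_move st (RT_caught _ _ ca). Qed.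

Lemma step_of (P : finType) k (mv : rel P) (c c' : {ffun 'I_k -> P}) :
  (forall i, mv (c i) (c' i)) -> cops_step mv c c'.
Proof. by move=> H; apply/forallP. Qed.

Lemma vcaught_of (T : finType) (e : rel T) k (c : {ffun 'I_k -> T}) r :
  (forall w, e r w -> exists i, c i = w) -> vcaught e c r.
Proof.
move=> H; apply/forallP => w; apply/implyP => /H [i ci].
by apply/existsP; exists i; rewrite ci.
Qed.

Lemma ecaught_of (T : finType) (e : rel T) k (c : {ffun 'I_k -> {set T}}) r :
  (forall w, e r w -> exists i, c i = [set r; w]) -> ecaught e c r.
Proof.
move=> H; apply/forallP => w; apply/implyP => /H [i ci].
by apply/existsP; exists i; rewrite ci.
Qed.

Lemma vertex_upper m : vertex_cops_win (@adj m) (m.+1 + m.+1).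
Proof.
set n := m.+1; set k := n + n.
have n0 : 0 < k by rewrite /k /n; lia.
exists [ffun _ => None]; split; first by apply/forallP.
case=> [[j [l|]]|].
-
  apply: (@win_now _ _ _ _ _ _ _ [ffun _ => xv j]).
    by apply: step_of => i; rewrite !ffunE.
  apply: vcaught_of => w; case: w => [[i [l'|]]|] //= /eqP <-.
  by exists (Ordinal n0); rewrite ffunE.
-
  apply: (CT_move (c' := [ffun i : 'I_k => if i < n then xv j else None])).
    by apply: step_of => i; rewrite !ffunE; case: ifP.
  apply: RT_move => r'; case: r' => [[i [l|]]|] //=.
  +
    rewrite orbC /= => /orP [/eqP <-|]; last by move/eqP.
    apply: CT_caught; apply: vcaught_of => w; case: w => [[i' [l'|]]|] //= /eqP <-.
    have h0 : 0 < k by [].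
    by exists (Ordinal h0); rewrite ffunE /= /n.
  + rewrite orbF => /eqP [->].
    apply: (@win_now _ _ _ _ _ _ _ [ffun i : 'I_k => if i < n then lf j (inord i) else None]).
      by apply: step_of => q; rewrite !ffunE; case: ifP => //= _; rewrite /vmove /= eqxx orbT.
    apply: vcaught_of => w; case: w => [[i' [l'|]]|] //= => [/eqP <-|_].
      have hl : l' < k by rewrite /k /n; have := ltn_ord l'; lia.
      by exists (Ordinal hl); rewrite ffunE /= ltn_ord inord_val.
    have hn : n < k by rewrite /k /n; lia.
    by exists (Ordinal hn); rewrite ffunE /= ltnn.
  + move=> _.
    apply: (@win_now _ _ _ _ _ _ _ [ffun i : 'I_k => if i < n then xv j else xv (lift j (inord (i - n)))]).
      by apply: step_of => q; rewrite !ffunE; case: ifP => //= _; rewrite /vmove /= eqxx.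
    apply: vcaught_of => w; case: w => [[j' [l'|]]|] //= _.
    case: (unliftP j j') => [t ->|->].
      have ht : n + t < k by rewrite /k /n; have := ltn_ord t; lia.
      exists (Ordinal ht); rewrite ffunE /=.
      have -> : (n + t < n) = false by lia.
      by rewrite addKn inord_val.
    by exists (Ordinal n0); rewrite ffunE /=.
-
  have hD : m.+2 <= k by rewrite /k /n; lia.
  apply: (@win_now _ _ _ _ _ _ _ [ffun i : 'I_k => if i < m.+2 then xv (inord i) else None]).
    by apply: step_of => i; rewrite !ffunE; case: ifP.
  apply: vcaught_of => w; case: w => [[j [l'|]]|] //= _.
  have hj : j < k by apply: leq_trans (ltn_ord j) hD.
  by exists (Ordinal hj); rewrite ffunE /= ltn_ord inord_val.
Qed.

Definition sp m (j : 'I_m.+2) : {set V m} := [set None; xv j].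
Definition le m (j : 'I_m.+2) (l : 'I_m.+1) : {set V m} := [set xv j; lf j l].

Lemma sp_edge m j : is_edge (@adj m) (sp j).
Proof. by apply/existsP; exists None; apply/existsP; exists (xv j); rewrite /= eqxx. Qed.
Lemma le_edge m j l : is_edge (@adj m) (le j l).
Proof. by apply/existsP; exists (xv j); apply/existsP; exists (lf j l); rewrite /= !eqxx. Qed.

Lemma meet (T : finType) (A B : {set T}) x : x \in A -> x \in B -> A :&: B != set0.
Proof. by move=> a b; apply/set0Pn; exists x; rewrite inE a b. Qed.

Lemma edge_upper m : edge_cops_win (@adj m) m.+2.
Proof.
have sp_sp : forall i j, emove (@adj m) (sp i) (sp j).
  by move=> i j; rewrite /emove sp_edge (@meet _ _ _ None) // !inE eqxx.
have sp_le : forall i l, emove (@adj m) (sp i) (le i l).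
  by move=> i l; rewrite /emove le_edge (@meet _ _ _ (xv i)) // !inE eqxx ?orbT.
have rootc : forall c : {ffun 'I_m.+2 -> {set V m}}, (forall i, c i = sp i) -> ecaught (@adj m) c None.
  move=> c hc; apply: ecaught_of => w; case: w => [[j [l|]]|] //= _.
  by exists j; rewrite hc.
exists [ffun i => sp i]; split.
  by apply/forallP => i; rewrite ffunE sp_edge.
case=> [[j [l|]]|].
- apply: (@win_now _ _ _ _ _ _ _ [ffun i => if i == j then le j l else sp i]).
    by apply: step_of => i; rewrite !ffunE; case: eqP => [->|]; rewrite ?sp_le ?sp_sp.
  apply: ecaught_of => w; case: w => [[i [l'|]]|] //= /eqP <-.
  by exists j; rewrite ffunE eqxx /le setUC.
- apply: (CT_move (c' := [ffun _ : 'I_m.+2 => sp j])).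
    by apply: step_of => i; rewrite !ffunE.
  apply: RT_move => r'; case: r' => [[i [l|]]|] //=.
  + rewrite orbC /= => /orP [/eqP <-|]; last by move/eqP.
    apply: (@win_now _ _ _ _ _ _ _ [ffun _ : 'I_m.+2 => le j l]).
      by apply: step_of => q; rewrite !ffunE.
    apply: ecaught_of => w; case: w => [[i' [l'|]]|] //= /eqP <-.
    by exists ord0; rewrite ffunE /le setUC.
  + rewrite orbF => /eqP [->].
    apply: (@win_now _ _ _ _ _ _ _ [ffun q => if unlift j q is Some l then le j l else sp j]).
      by apply: step_of => q; rewrite !ffunE; case: (unlift j q).
    apply: ecaught_of => w; case: w => [[i' [l'|]]|] //=.
      move=> /eqP <-; exists (lift j l'); rewrite ffunE liftK //.
    by move=> _; exists j; rewrite ffunE unlift_none /sp setUC.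
  + move=> _; apply: (@win_now _ _ _ _ _ _ _ [ffun q => sp q]).
      by apply: step_of => q; rewrite !ffunE.
    by apply: rootc => i; rewrite ffunE.
- by apply: CT_caught; apply: rootc => i; rewrite ffunE.
Qed.

Theorem corollary2 (D : nat) (hD : 2 <= D) :
  exists (T : finType) (e : rel T),
    symmetric e /\ irreflexive e /\ connected_graph e /\ max_degree e = D /\
    cV_is e (2 * (D - 1)) /\ cE_is e D.
Proof.
case: D hD => [|[|m]] // _.
exists (V m), (@adj m).
have -> : 2 * (m.+2 - 1) = m.+1 + m.+1 by lia.
split; first exact: adj_sym.
split; first exact: adj_irr.
split; first exact: adj_conn.
split; first exact: maxdeg.
split; split.
- exact: vertex_upper.
- by move=> k hk; apply: vertex_lower.
- exact: edge_upper.
- by move=> k hk; apply: edge_lower.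
Qed.
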